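(* Let $S[1..n]$ be a string and $1\le x\le y\le n$. If a longest repeat $\mathrm{LR}_x^y$ exists, then every choice of $\mathrm{LR}_x^y$ is a useful LLR, i.e., it equals $\mathrm{LLR}_k$ for some position $k$, and it is not a substring of any other LLR.
   Context: For $1\le i\le j\le n$, $S[i..j]=S[i]\cdots S[j]$. A substring $S[i..j]$ covers $[x..y]$ if $i\le x\le y\le j$. A substring $S[i..j]$ is unique if there is no other substring $S[i'..j']$ with $S[i'..j']=S[i..j]$ and $i'\ne i$; it is a repeat otherwise. $\mathrm{LR}_x^y$ is a repeat $S[i..j]$ covering $[x..y]$ such that no repeat $S[i'..j']$ covering $[x..y]$ has $j'-i'>j-i$. The left-bounded longest repeat starting at position $k$, $\mathrm{LLR}_k$, is a repeat $S[k..j]$ such that either $j=n$ or $S[k..j+1]$ is unique (it exists iff $S[k]$ is a repeat, and is then unique as an occurrence). An LLR is useless if it is a substring (as a position interval: contained in the position interval) of another LLR; otherwise it is useful. *)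

(* Defs.v *)
(* Strings are sequences over an eqType alphabet; positions
   are 1-based: S[1..n] with n = size S. *)
From mathcomp Require Import all_boot.
Set Implicit Arguments. Unset Strict Implicit. Unset Printing Implicit Defensive.

Section Strings.
Variable T : eqType.

Definition substr (s : seq T) (i j : nat) : seq T :=
  take (j.+1 - i) (drop i.-1 s).

Definition valid (s : seq T) (i j : nat) : Prop :=
  1 <= i /\ i <= j /\ j <= size s.

Definition covers (i j x y : nat) : Prop := i <= x /\ x <= y /\ y <= j.

Definition unique_occ (s : seq T) (i j : nat) : Prop :=
  valid s i j /\
  ~ (exists i' j', valid s i' j' /\ substr s i' j' = substr s i j /\ i' <> i).

Definition repeat_occ (s : seq T) (i j : nat) : Prop :=
  valid s i j /\ ~ unique_occ s i j.

Definition is_LR (s : seq T) (x y i j : nat) : Prop :=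
  repeat_occ s i j /\ covers i j x y /\
  forall i' j', repeat_occ s i' j' -> covers i' j' x y -> j' - i' <= j - i.

Definition is_LLR (s : seq T) (k j : nat) : Prop :=
  repeat_occ s k j /\ (j = size s \/ unique_occ s k j.+1).

Definition useful_LLR (s : seq T) (k j : nat) : Prop :=
  is_LLR s k j /\
  forall k' j', is_LLR s k' j' -> (k', j') <> (k, j) -> ~ (k' <= k /\ j <= j').

End Strings.

(* Main.v *)
Require Import Defs.
From mathcomp Require Import all_boot.
From mathcomp Require Import zify.
From Stdlib Require Import Classical.

Theorem lemma3 (T : eqType) (s : seq T) (x y : nat) :
  1 <= x -> x <= y -> y <= size s ->
  forall i j, is_LR s x y i j ->
    (exists k, k = i /\ is_LLR s k j) /\ useful_LLR s i j.
Proof.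
move=> Hx Hxy Hy i j [[[Vi [Vij Vj]] Hnu] [[Ci [Cxy Cj]] Hmax]].
have LLR : is_LLR s i j.
  split; first by split => //; split.
  have [E|L] : j = size s \/ j < size s by lia.
    by left.
  right; apply: NNPP => Hu.
  have Hr : repeat_occ s i j.+1 by split => //; split; [|split]; lia.
  have := Hmax _ _ Hr; rewrite /covers => H.
  have : j.+1 - i <= j - i by apply: H; lia.
  lia.
split; first by exists i.
split => // k' j' [Hr _] Hne [Hk Hj].
case: (Hr) => [[V1 [V2 V3]] _].
have : j' - k' <= j - i by apply: Hmax => //; rewrite /covers; lia.
move=> H; apply: Hne; congr pair; lia.
Qed.
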